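(* Let $\mathcal A\in\mathbb C^{n\times n}$ be nonsingular and positive definite, suppose $\mathcal A=\mathcal P_1+\mathcal P_2$ with $\mathcal P_1,\mathcal P_2$ positive semidefinite, and let $\Sigma$ be Hermitian positive definite. Let $\Gamma_{\mathrm{PPS}}=(\Sigma+\mathcal P_1)^{-1}(\Sigma-\mathcal P_2)(\Sigma+\mathcal P_2)^{-1}(\Sigma-\mathcal P_1)$. If one of the following conditions holds, then $\rho(\Gamma_{\mathrm{PPS}})<1$: (1) $\mathrm{ev}(\Gamma_{\mathrm{PPS}})\cap\mathrm{null}(\mathcal P_1+\mathcal P_1^* )\subseteq\mathrm{null}(\mathcal P_1)$; (2) $\mathrm{ev}(\Gamma_{\mathrm{PPS}})\subseteq\mathrm{null}(\mathcal P_1)\cup\mathrm{null}(\mathcal P_2+\mathcal P_2^* )$.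
   Context: A matrix $\mathcal P\in\mathbb C^{n\times n}$ is called positive semidefinite if $\mathcal P+\mathcal P^*$ is Hermitian positive semidefinite, and positive definite if $\mathcal P+\mathcal P^*$ is Hermitian positive definite; $\mathcal P$ need not be Hermitian. $\rho(\cdot)$ is the spectral radius, $\mathrm{null}(\cdot)$ the null space, and $\mathrm{ev}(M)$ the set of all nonzero eigenvectors of a square matrix $M$. *)

(* Defs.v *)
From HB Require Import structures.
From mathcomp Require Import all_boot all_order all_algebra.
From mathcomp Require Import reals complex.
Set Implicit Arguments. Unset Strict Implicit. Unset Printing Implicit Defensive.
Import Order.TTheory GRing.Theory Num.Theory.
Local Open Scope ring_scope.
Local Open Scope complex_scope.

Section Defs.
Variable C : numClosedFieldType.

Definition ctmx (m n : nat) (M : 'M[C]_(m, n)) : 'M[C]_(n, m) :=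
  (map_mx Num.conj M)^T.

Definition hermitian (n : nat) (H : 'M[C]_n) : Prop := ctmx H = H.

Definition herm_psd (n : nat) (H : 'M[C]_n) : Prop :=
  hermitian H /\ forall x : 'cV[C]_n, 0 <= (ctmx x *m H *m x) 0 0.
Definition herm_pd (n : nat) (H : 'M[C]_n) : Prop :=
  hermitian H /\ forall x : 'cV[C]_n, x != 0 -> 0 < (ctmx x *m H *m x) 0 0.

(* the paper's (possibly non-Hermitian) positive (semi)definiteness *)
Definition pos_semidef (n : nat) (P : 'M[C]_n) : Prop := herm_psd (P + ctmx P).
Definition pos_def (n : nat) (P : 'M[C]_n) : Prop := herm_pd (P + ctmx P).

Definition nullsp (n : nat) (M : 'M[C]_n) (x : 'cV[C]_n) : Prop := M *m x = 0.

Definition ev (n : nat) (M : 'M[C]_n) (x : 'cV[C]_n) : Prop :=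
  x != 0 /\ exists lambda : C, M *m x = lambda *: x.
End Defs.

Definition spectral_radius (C : numClosedFieldType) (n : nat) (M : 'M[C]_n) : C :=
  \big[Num.max/0]_(z <- sval (closed_field_poly_normal (char_poly M))) `|z|.

Definition Gamma_PPS (C : numClosedFieldType) (n : nat) (S P1 P2 : 'M[C]_n) : 'M[C]_n :=
  invmx (S + P1) *m (S - P2) *m invmx (S + P2) *m (S - P1).

(* Main.v *)
Require Import Defs.
From HB Require Import structures.
From mathcomp Require Import all_boot all_order all_algebra.
From mathcomp Require Import reals complex.
From mathcomp Require Import ring.
Set Implicit Arguments. Unset Strict Implicit. Unset Printing Implicit Defensive.
Import Order.TTheory GRing.Theory Num.Theory.
Local Open Scope ring_scope.

Section Helpers.
Variable C : numClosedFieldType.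

Lemma ctmxM m n p (A : 'M[C]_(m, n)) (B : 'M[C]_(n, p)) :
  ctmx (A *m B) = ctmx B *m ctmx A.
Proof. by rewrite /ctmx map_mxM trmx_mul. Qed.

Lemma ctmxD m n (A B : 'M[C]_(m, n)) : ctmx (A + B) = ctmx A + ctmx B.
Proof. by apply/matrixP=> i j; rewrite /ctmx !mxE rmorphD. Qed.

Lemma ctmxN m n (A : 'M[C]_(m, n)) : ctmx (- A) = - ctmx A.
Proof. by apply/matrixP=> i j; rewrite /ctmx !mxE rmorphN. Qed.

Lemma ctmxB m n (A B : 'M[C]_(m, n)) : ctmx (A - B) = ctmx A - ctmx B.
Proof. by rewrite ctmxD ctmxN. Qed.

Lemma ctmxZ m n a (A : 'M[C]_(m, n)) : ctmx (a *: A) = a^* *: ctmx A.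
Proof. by apply/matrixP=> i j; rewrite /ctmx !mxE rmorphM. Qed.

Lemma ctmxK m n (A : 'M[C]_(m, n)) : ctmx (ctmx A) = A.
Proof. by apply/matrixP=> i j; rewrite /ctmx !mxE conjCK. Qed.

Lemma ctmx1 n : ctmx (1%:M : 'M[C]_n) = 1%:M.
Proof. by apply/matrixP=> i j; rewrite /ctmx !mxE eq_sym; case: (_ == _); rewrite /= ?conjC1 ?conjC0. Qed.

Lemma ctmx0 m n : ctmx (0 : 'M[C]_(m, n)) = 0.
Proof. by apply/matrixP=> i j; rewrite /ctmx !mxE conjC0. Qed.

Lemma ctmx11 (a : 'M[C]_1) : ctmx a 0 0 = (a 0 0)^*.
Proof. by rewrite /ctmx !mxE. Qed.

Definition qf n (M : 'M[C]_n) (z : 'cV[C]_n) : C := (ctmx z *m M *m z) 0 0.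

Lemma qf_conj n (M : 'M[C]_n) z : (qf M z)^* = qf (ctmx M) z.
Proof. by rewrite /qf -ctmx11 !ctmxM ctmxK mulmxA. Qed.

Lemma qfD n (M N : 'M[C]_n) z : qf (M + N) z = qf M z + qf N z.
Proof. by rewrite /qf mulmxDr mulmxDl mxE. Qed.

Lemma qfZ n a (M : 'M[C]_n) z : qf (a *: M) z = a * qf M z.
Proof. by rewrite /qf -scalemxAr -scalemxAl mxE. Qed.

Lemma qf_self_ge0 n (v : 'cV[C]_n) : 0 <= (ctmx v *m v) 0 0.
Proof.
rewrite mxE; apply: sumr_ge0 => i _; rewrite /ctmx !mxE mulrC; exact: mul_conjC_ge0.
Qed.

Lemma qf_self_eq0 n (v : 'cV[C]_n) : (ctmx v *m v) 0 0 = 0 -> v = 0.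
Proof.
rewrite mxE => /eqP; rewrite psumr_eq0 => [/allP H|i _]; last first.
  by rewrite /ctmx !mxE mulrC; exact: mul_conjC_ge0.
apply/matrixP=> i j; rewrite (ord1 j) !mxE.
have /H : i \in index_enum 'I_n by rewrite mem_index_enum.
by rewrite /ctmx !mxE mulrC mul_conjC_eq0 => /implyP /(_ isT) /eqP.
Qed.


Lemma entryD (A B : 'M[C]_1) : (A + B) 0 0 = A 0 0 + B 0 0.
Proof. by rewrite mxE. Qed.
Lemma entryB (A B : 'M[C]_1) : (A - B) 0 0 = A 0 0 - B 0 0.
Proof. by rewrite !mxE. Qed.
Lemma entryZ a (A : 'M[C]_1) : (a *: A) 0 0 = a * A 0 0.
Proof. by rewrite mxE. Qed.

Lemma unit_of_ker n (M : 'M[C]_n) :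
  (forall z : 'cV[C]_n, M *m z = 0 -> z = 0) -> M \in unitmx.
Proof.
move=> H; rewrite -unitmx_tr unitmxE unitfE; apply/negP => /det0P [v vn0 vM].
have := H v^T; rewrite -[M]trmxK -trmx_mul vM trmx0 => /(_ erefl) /eqP.
by rewrite -trmx0 (inj_eq trmx_inj) (negbTE vn0).
Qed.

Lemma char_poly_tr n (M : 'M[C]_n) : char_poly M^T = char_poly M.
Proof.
rewrite /char_poly -det_tr; congr (\det _); apply/matrixP => i j; rewrite !mxE eq_sym.
by [].
Qed.

Lemma root_eigen n (M : 'M[C]_n) a : root (char_poly M) a ->
  exists2 x : 'cV[C]_n, x != 0 & M *m x = a *: x.
Proof.
rewrite -char_poly_tr -eigenvalue_root_char => /eigenvalueP [v vM vn0].
exists v^T; first by rewrite -trmx0 (inj_eq trmx_inj).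
by rewrite -[M]trmxK -trmx_mul vM linearZ.
Qed.

Lemma psd_null n (H : 'M[C]_n) x : herm_psd H -> qf H x = 0 -> H *m x = 0.
Proof.
move=> [hH psd] q0.
set v := H *m x.
set a := (ctmx v *m v) 0 0.
set c := qf H v.
have a0 : 0 <= a by exact: qf_self_ge0.
have c0 : 0 <= c by exact: psd.
have hx : ctmx x *m H = ctmx v by rewrite /v ctmxM hH.
have := psd ((c + 1) *: x - a *: v).
rewrite ctmxB !ctmxZ !geC0_conj ?addr_ge0 ?ler01 //.
rewrite !mulmxBl !mulmxBr -!scalemxAl -!scalemxAr hx.
rewrite -[ctmx v *m H *m x]mulmxA -/v !entryB !entryZ -/a -/c.
have -> : (ctmx v *m x) 0 0 = 0 by rewrite -hx.
have -> : (c + 1) * ((c + 1) * 0) - (c + 1) * (a * a) - (a * ((c + 1) * a) - a * (a * c)) = - ((a * a) * (c + 2)) by ring.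
rewrite oppr_ge0 => hle.
have : a * a * (c + 2) == 0.
  by rewrite eq_le hle mulr_ge0 ?mulr_ge0 ?addr_ge0 ?ler0n.
rewrite !mulf_eq0 orbb => /orP [/eqP a00|].
  exact: qf_self_eq0.
by rewrite gt_eqF // ltr_wpDl // ltr0n.
Qed.


Lemma cayley_mx n (S P K : 'M[C]_n) : K *m S = 1%:M -> S *m K = 1%:M ->
  (S - ctmx P) *m K *m (S - P) =
  (S + ctmx P) *m K *m (S + P) - 2%:R *: (P + ctmx P).
Proof.
move=> hKS hSK.
rewrite !mulmxBl !mulmxDl !mulmxBr !mulmxDr hSK !mul1mx -!(mulmxA (ctmx P)) hKS mulmx1.
move: (ctmx P *m (K *m P)) => T; move: (ctmx P) => Q.
by apply/matrixP => i j; rewrite !mxE; ring.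
Qed.

Lemma cayley n (S P K : 'M[C]_n) z : ctmx S = S -> K *m S = 1%:M -> S *m K = 1%:M ->
  qf K ((S - P) *m z) = qf K ((S + P) *m z) - 2%:R * qf (P + ctmx P) z.
Proof.
move=> hS hKS hSK.
have E : forall X Y, ctmx z *m X *m K *m (Y *m z) = ctmx z *m (X *m K *m Y) *m z.
  by move=> X Y; rewrite !mulmxA.
rewrite /qf !ctmxM ctmxB ctmxD hS !E cayley_mx // mulmxBr mulmxBl entryB.
by rewrite -scalemxAr -scalemxAl entryZ.
Qed.

Lemma qf_null n (M : 'M[C]_n) z : M *m z = 0 -> qf M z = 0.
Proof. by move=> h; rewrite /qf -mulmxA h mulmx0 mxE. Qed.

Lemma qf_scale n (K : 'M[C]_n) a y : qf K (a *: y) = a * a^* * qf K y.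
Proof.
rewrite /qf ctmxZ -scalemxAl -scalemxAl -scalemxAr !entryZ.
by rewrite mulrA [a^* * a]mulrC.
Qed.

Lemma main_lemma n (P1 P2 S : 'M[C]_n) (x : 'cV[C]_n) lam :
  pos_def (P1 + P2) -> pos_semidef P1 -> pos_semidef P2 -> herm_pd S ->
  ((P1 + ctmx P1) *m x = 0 -> P1 *m x = 0 \/ (P2 + ctmx P2) *m x = 0) ->
  x != 0 -> Gamma_PPS S P1 P2 *m x = lam *: x -> `|lam| < 1.
Proof.
move=> pdA psd1 psd2 [hS pdS] Hc xn0 Gx.
have unitSP : forall P, pos_semidef P -> (S + P) \in unitmx.
  move=> P psdP; apply: unit_of_ker => z hz; apply/eqP; apply/negP => zn0.
  have : qf ((S + P) + ctmx (S + P)) z = 0.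
    by rewrite qfD -qf_conj qf_null // conjC0 addr0.
  rewrite ctmxD hS addrACA qfD qfD.
  apply/eqP; rewrite gt_eqF //.
  have zz : z != 0 by apply/negP.
  apply: ltr_wpDr; first exact: psdP.2.
  by apply: addr_gt0; apply: pdS.
have unitS : S \in unitmx.
  apply: unit_of_ker => z hz; apply/eqP; apply/negP => zn0.
  have zz : z != 0 by apply/negP.
  by have := pdS z zz; rewrite -/(qf S z) qf_null // ltxx.
set K := invmx S.
have hKS : K *m S = 1%:M by rewrite mulVmx.
have hSK : S *m K = 1%:M by rewrite mulmxV.
have hK : ctmx K = K.
  have e : ctmx K *m ctmx S = 1%:M by rewrite -ctmxM hSK ctmx1.
  rewrite hS in e.
  by rewrite -[ctmx K]mulmx1 -hSK mulmxA e mul1mx.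
have Npos : forall v, v != 0 -> 0 < qf K v.
  move=> v vn0.
  have -> : qf K v = qf S (K *m v).
    by rewrite /qf ctmxM hK -!mulmxA (mulmxA S) hSK mul1mx.
  apply: pdS; apply/eqP => h; move/eqP: vn0; apply.
  by rewrite -[v]mul1mx -hSK -mulmxA h mulmx0.
have finalC : (P1 + ctmx P1) *m x = 0 -> (P2 + ctmx P2) *m x = 0 -> False.
  move=> h1 h2; have : 0 < qf ((P1 + P2) + ctmx (P1 + P2)) x by exact: pdA.2 x xn0.
  by rewrite ctmxD addrACA qfD !qf_null // addr0 ltxx.
set B1 := S + P1; set B2 := S + P2.
have uB1 : B1 \in unitmx by exact: unitSP.
have uB2 : B2 \in unitmx by exact: unitSP.
set w := (S - P1) *m x; set u := invmx B2 *m w.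
have hu : B2 *m u = w by rewrite /u mulmxA mulmxV // mul1mx.
have hG : (S - P2) *m u = lam *: (B1 *m x).
  have := congr1 (mulmx B1) Gx; rewrite /Gamma_PPS -scalemxAr !mulmxA mulmxV // mul1mx.
  by move=> <-; rewrite /u /w ?mulmxA.
set y := B1 *m x.
set q1 := qf (P1 + ctmx P1) x; set q2 := qf (P2 + ctmx P2) u.
have e1 : qf K w = qf K y - 2%:R * q1 by rewrite /w cayley.
have e2 : qf K ((S - P2) *m u) = qf K (B2 *m u) - 2%:R * q2 by rewrite cayley.
rewrite hG qf_scale hu e1 -/y in e2.
have yn0 : y != 0.
  apply/eqP => h; move/eqP: xn0; apply.
  by rewrite -[x]mul1mx -(mulVmx uB1) -mulmxA -/y h mulmx0.
have ny := Npos _ yn0.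
have q1ge : 0 <= q1 by exact: psd1.2.
have q2ge : 0 <= q2 by exact: psd2.2.
have [q12|q12] := eqVneq (q1 + q2) 0.
  have q10 : q1 = 0.
    by apply/eqP; rewrite eq_le q1ge andbT -q12 lerDl.
  have q20 : q2 = 0 by move: q12; rewrite q10 add0r.
  have h1 : (P1 + ctmx P1) *m x = 0 by apply: psd_null.
  have h2 : (P2 + ctmx P2) *m u = 0 by apply: psd_null.
  case: (Hc h1) => [hP1|]; last by move/(finalC h1).
  exfalso.
  have hw : w = S *m x by rewrite /w mulmxBl hP1 subr0.
  have hy : y = S *m x by rewrite /y /B1 mulmxDl hP1 addr0.
  rewrite -[B1 *m x]/y hy -hw -hu in hG.
  move: hG; rewrite /B2 mulmxBl mulmxDl => hG.
  have hb : (1 + lam) *: (P2 *m u) = (1 - lam) *: (S *m u).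
    move: hG; move: (P2 *m u) (S *m u) => b a hG.
    apply/matrixP => i j; move/matrixP: hG => /(_ i j); rewrite !mxE => hG.
    have -> : (1 + lam) * b i j = (1 - lam) * a i j - (a i j - b i j - lam * (a i j + b i j)) by ring.
    by rewrite hG subrr subr0.
  have hx2 : (1 + lam) *: x = 2%:R *: u.
    have -> : x = K *m (S *m u + P2 *m u) by rewrite -mulmxDl -/B2 hu hw mulmxA hKS mul1mx.
    rewrite scalemxAr scalerDr hb -scalerDl.
    have -> : 1 + lam + (1 - lam) = 2%:R :> C by ring.
    by rewrite -scalemxAr mulmxA hKS mul1mx.
  have : (1 + lam) *: ((P2 + ctmx P2) *m x) = 0 by rewrite scalemxAr hx2 -scalemxAr h2 scaler0.
  move/eqP; rewrite scalemx_eq0 => /orP [/eqP hl|/eqP h3]; last exact: (finalC h1 h3).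
  move: hx2; rewrite hl scale0r => /esym /eqP; rewrite scalemx_eq0 pnatr_eq0 /= => /eqP u0.
  have : S *m x = 0 by rewrite -hw -hu u0 mulmx0.
  move=> h; move/eqP: xn0; apply.
  by rewrite -[x]mul1mx -hKS -mulmxA h mulmx0.
have q12p : 0 < q1 + q2 by rewrite lt_def q12 addr_ge0.
have : 0 < (1 - lam * lam^*) * qf K y.
  have -> : (1 - lam * lam^*) * qf K y = 2%:R * (q1 + q2).
    by rewrite mulrBl mul1r e2; ring.
  by rewrite mulr_gt0 // ltr0n.
rewrite pmulr_lgt0 // subr_gt0 -normCK expr_lt1 //.
Qed.

End Helpers.

Local Open Scope complex_scope.

Theorem theorem3p7 (R : realType) (n : nat) (A P1 P2 S : 'M[R[i]]_n) :
  A \in unitmx -> pos_def A ->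
  A = P1 + P2 -> pos_semidef P1 -> pos_semidef P2 ->
  herm_pd S ->
  ((forall x, ev (Gamma_PPS S P1 P2) x ->
        nullsp (P1 + ctmx P1) x -> nullsp P1 x)
   \/
   (forall x, ev (Gamma_PPS S P1 P2) x ->
        nullsp P1 x \/ nullsp (P2 + ctmx P2) x)) ->
  spectral_radius (Gamma_PPS S P1 P2) < 1.
Proof.
move=> _ pdA hA psd1 psd2 pdS cond.
rewrite hA in pdA.
rewrite /spectral_radius; case: closed_field_poly_normal => r /= hr.
have Hr : forall z, z \in r -> `|z| < 1.
  move=> z zr.
  have : root (char_poly (Gamma_PPS S P1 P2)) z.
    by rewrite hr (monicP (char_poly_monic _)) scale1r root_prod_XsubC.
  move/root_eigen => [x xn0 hx].
  apply: (main_lemma pdA psd1 psd2 pdS _ xn0 hx) => hnull.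
  have ex : ev (Gamma_PPS S P1 P2) x by split => //; exists z.
  case: cond => [h1|h2]; first by left; exact: h1 x ex hnull.
  exact: h2 x ex.
elim: r {hr} Hr => [|a r IH] H; first by rewrite big_nil ltr01.
rewrite big_cons.
have h1 : `|a| < 1 by apply: H; rewrite mem_head.
have h2 := IH (fun z zr => H z (mem_behead (s := a :: r) zr)).
by rewrite /Order.max; case: ifP.
Qed.
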